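(* Suppose that \[ \mathcal M = \left\{ M \geq 0 : \begin{pmatrix} A - M & B^* \\ B & M \end{pmatrix} \geq 0\right\} \] is non-empty with maximal element $M_+$, minimal element $M_-$, and $M_* = \tfrac{1}{2}(M_+ + M_-)$. Let $A-M_\pm = E_\pm^*E_\pm$ and $A-M_* = E_*^*E_*$, $M_\pm = F_\pm^*F_\pm$ and $M_* = F_*^*F_*$, and $B = F_\pm^*G_\pm E_\pm = F_*^*G_* E_*$, where $G_\pm : \overline{\mathrm{ran}}\, E_\pm \to \overline{\mathrm{ran}}\, F_\pm$ and $G_*: \overline{\mathrm{ran}}\, E_* \to \overline{\mathrm{ran}}\, F_*$ are contractions. The set $\mathcal M$ is a singleton if and only if the operators $G_+$, $G_-$ and $G_*$ are unitary.
   Context: $A$ and $B$ are bounded linear operators on a Hilbert space, with $A$ selfadjoint; $\begin{pmatrix} A - M & B^* \\ B & M \end{pmatrix}$ is viewed as an operator on the direct sum of two copies of that space, and $\mathcal M$ is the set of positive operators $M$ making it positive. When non-empty, $\mathcal M$ is norm closed and convex and has a maximal element $M_+$ and a minimal element $M_-$. Here $\overline{\mathrm{ran}}\, X$ denotes the closure of the range of the operator $X$. *)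

(* Defs.v *)
From HB Require Import structures.
From mathcomp Require Import all_boot all_order all_algebra.
From mathcomp Require Import complex.
From mathcomp Require Import reals.
Set Implicit Arguments. Unset Strict Implicit. Unset Printing Implicit Defensive.
Import Order.TTheory GRing.Theory Num.Theory ComplexField.
Local Open Scope ring_scope.

Section Hilbert.
Variable R : realType.
Local Notation C := (R[i]).

Definition is_inner_product (V : lmodType C) (ip : V -> V -> C) : Prop :=
  [/\ forall (a : C) (x y z : V), ip (a *: x + y) z = a * ip x z + ip y z,
      forall x y : V, ip y x = (ip x y)^*,
      forall x : V, 0 <= ip x x
    & forall x : V, ip x x = 0 -> x = 0].

Definition ip_norm (V : lmodType C) (ip : V -> V -> C) (x : V) : R :=
  Num.sqrt (complex.Re (ip x x)).

Definition ip_complete (V : lmodType C) (ip : V -> V -> C) : Prop :=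
  forall u : nat -> V,
    (forall e : R, 0 < e -> exists N : nat, forall m n : nat,
        (N <= m)%N -> (N <= n)%N -> ip_norm ip (u m - u n) < e) ->
    exists l : V, forall e : R, 0 < e -> exists N : nat, forall n : nat,
        (N <= n)%N -> ip_norm ip (u n - l) < e.

End Hilbert.

Record hspace (R : realType) := HSpace {
  hs_car :> lmodType (R[i]);
  hs_ip : hs_car -> hs_car -> R[i];
  hs_inner : is_inner_product hs_ip;
  hs_complete : ip_complete hs_ip }.

Section Operators.
Variable R : realType.
Local Notation C := (R[i]).

Definition hnorm (H : hspace R) (x : H) : R := ip_norm (@hs_ip R H) x.
Definition inner (H : hspace R) (x y : H) : C := @hs_ip R H x y.

Definition bounded_linear (H K : hspace R) (T : H -> K) : Prop :=
  (forall (a : C) (x y : H), T (a *: x + y) = a *: T x + T y) /\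
  exists c : R, forall x : H, hnorm (T x) <= c * hnorm x.

Definition is_adjoint (H K : hspace R) (T : H -> K) (S : K -> H) : Prop :=
  forall (x : H) (y : K), inner (T x) y = inner x (S y).

Definition selfadjoint (H : hspace R) (T : H -> H) : Prop := is_adjoint T T.

(* Positive operator: bounded linear with <Tx,x> >= 0 (in C, i.e. real and
   nonnegative) for all x. *)
Definition positive_op (H : hspace R) (T : H -> H) : Prop :=
  bounded_linear T /\ forall x : H, 0 <= inner (T x) x.

Definition op_le (H : hspace R) (T1 T2 : H -> H) : Prop :=
  positive_op (fun x => T2 x - T1 x).

(* Positivity of the block operator [[A - M, Bs]; [B, M]] on H (+) H,
   where Bs = B^*: <(A-M)x + Bs y, x> + <B x + M y, y> >= 0. *)
Definition block_positive (H : hspace R) (A B Bs M : H -> H) : Prop :=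
  forall x y : H, 0 <= inner (A x - M x + Bs y) x + inner (B x + M y) y.

Definition calM (H : hspace R) (A B Bs : H -> H) (M : H -> H) : Prop :=
  positive_op M /\ block_positive A B Bs M.

Definition factors_as (H K : hspace R) (T : H -> H) (E : H -> K) : Prop :=
  bounded_linear E /\
  exists Es : K -> H, is_adjoint E Es /\ forall x : H, T x = Es (E x).

Definition cl_ran (H K : hspace R) (E : H -> K) (y : K) : Prop :=
  forall e : R, 0 < e -> exists x : H, hnorm (y - E x) < e.

Definition contraction_between (H K1 K2 : hspace R)
    (E : H -> K1) (F : H -> K2) (G : K1 -> K2) : Prop :=
  [/\ forall (a : C) (u v : K1), cl_ran E u -> cl_ran E v ->
        G (a *: u + v) = a *: G u + G v,
      forall u : K1, cl_ran E u -> cl_ran F (G u)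
    & forall u : K1, cl_ran E u -> hnorm (G u) <= hnorm u].

Definition unitary_between (H K1 K2 : hspace R)
    (E : H -> K1) (F : H -> K2) (G : K1 -> K2) : Prop :=
  [/\ forall (a : C) (u v : K1), cl_ran E u -> cl_ran E v ->
        G (a *: u + v) = a *: G u + G v,
      forall u : K1, cl_ran E u -> cl_ran F (G u),
      forall u : K1, cl_ran E u -> hnorm (G u) = hnorm u
    & forall w : K2, cl_ran F w -> exists2 u : K1, cl_ran E u & G u = w].

Definition block_factor (H K1 K2 : hspace R) (B : H -> H)
    (E : H -> K1) (F : H -> K2) (G : K1 -> K2) : Prop :=
  contraction_between E F G /\
  exists Fs : K2 -> H, is_adjoint F Fs /\ forall x : H, B x = Fs (G (E x)).

End Operators.

(* Main.v *)
Require Import Defs.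
From HB Require Import structures.
From mathcomp Require Import all_boot all_order all_algebra.
From mathcomp Require Import complex.
From mathcomp Require Import reals.
From mathcomp Require Import ring lra.
Import Order.TTheory GRing.Theory Num.Theory ComplexField.
Local Open Scope ring_scope.
Set Implicit Arguments. Unset Strict Implicit. Unset Printing Implicit Defensive.

Lemma subBB (V : zmodType) (u v a b : V) : u - v - (a - b) = (u - a) + - (v - b).
Proof. by rewrite !opprB addrACA [RHS]addrACA (addrC (- v)). Qed.

Lemma subB3 (V : zmodType) (a b v : V) : a - b = (v - b) + - (v - a).
Proof. by rewrite opprB [RHS]addrC addrA subrK. Qed.

Lemma zmod_t1 (V : zmodType) (v a b c : V) : v - (a + b) = (v - c - b) + (c - a).
Proof. by rewrite addrA (addrAC (v - c)) subrK opprD addrA addrAC. Qed.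
Lemma zmod_t2 (V : zmodType) (v a c : V) : v - c = (v - a) + (a - c).
Proof. by rewrite addrA subrK. Qed.

Section Basics.
Variable R : realType.
Local Notation "x %:C" := (real_complex R x) (at level 1, format "x %:C") : ring_scope.
Local Notation C := (R[i]).

Lemma realC_conj (r : R) : (r%:C)^* = r%:C :> C.
Proof. by apply/CrealP; apply/complex_realP; exists r. Qed.

Lemma absC_real (z : C) : `|z| = (complex.Re `|z|)%:C.
Proof. by rewrite RRe_real // normr_real. Qed.

Lemma absC_ge0R (z : C) : 0 <= complex.Re `|z|.
Proof. by rewrite -ler0c -absC_real. Qed.

Lemma ge0C_real (z : C) : 0 <= z -> z = (complex.Re z)%:C.
Proof. by move=> h; rewrite RRe_real //; apply: ger0_real. Qed.

Lemma conjM (u v : C) : (u * v)^* = u^* * v^*. Proof. exact: rmorphM. Qed.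
Lemma conjD (u v : C) : (u + v)^* = u^* + v^*. Proof. exact: rmorphD. Qed.
Lemma conjN (u : C) : (- u)^* = - u^*. Proof. exact: rmorphN. Qed.
Lemma conjB (u v : C) : (u - v)^* = u^* - v^*. Proof. exact: rmorphB. Qed.
Lemma conjV (u : C) : (u^-1)^* = (u^*)^-1. Proof. exact: fmorphV. Qed.
Lemma conj0 : (0 : C)^* = 0. Proof. exact: rmorph0. Qed.

Lemma realCD (a b : R) : (a + b)%:C = a%:C + b%:C. Proof. exact: rmorphD. Qed.
Lemma realCB (a b : R) : (a - b)%:C = a%:C - b%:C. Proof. exact: rmorphB. Qed.
Lemma realCM (a b : R) : (a * b)%:C = a%:C * b%:C. Proof. exact: rmorphM. Qed.
Lemma realCX (a : R) n : (a ^+ n)%:C = a%:C ^+ n. Proof. exact: rmorphXn. Qed.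
Lemma realCN (a : R) : (- a)%:C = - a%:C. Proof. exact: rmorphN. Qed.
Lemma realC_half : (2^-1 : R)%:C = 2^-1 :> C.
Proof. by rewrite (fmorphV (real_complex R)) rmorph_nat. Qed.
Lemma realC0 : (0 : R)%:C = 0. Proof. exact: rmorph0. Qed.

Variable H : hspace R.

Lemma ipDl (a : C) (x y z : H) : inner (a *: x + y) z = a * inner x z + inner y z.
Proof. by case: (hs_inner H) => h _ _ _; apply: h. Qed.
Lemma ipC (x y : H) : inner y x = (inner x y)^*.
Proof. by case: (hs_inner H) => _ h _ _; apply: h. Qed.
Lemma ip_ge0 (x : H) : 0 <= inner x x.
Proof. by case: (hs_inner H) => _ _ h _; apply: h. Qed.
Lemma ip_eq0 (x : H) : inner x x = 0 -> x = 0.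
Proof. by case: (hs_inner H) => _ _ _ h; apply: h. Qed.

Lemma ip0 (z : H) : inner 0 z = 0.
Proof.
have h := ipDl 1 0 0 z; rewrite scale1r addr0 mul1r in h.
by apply: (@addrI _ (inner 0 z)); rewrite addr0 -h.
Qed.
Lemma ipD (x y z : H) : inner (x + y) z = inner x z + inner y z.
Proof. by rewrite -[x in LHS]scale1r ipDl mul1r. Qed.
Lemma ipZ (a : C) (x z : H) : inner (a *: x) z = a * inner x z.
Proof. by rewrite -[a *: x]addr0 ipDl ip0 addr0. Qed.
Lemma ipN (x z : H) : inner (- x) z = - inner x z.
Proof. by rewrite -scaleN1r ipZ mulN1r. Qed.
Lemma ipB (x y z : H) : inner (x - y) z = inner x z - inner y z.
Proof. by rewrite ipD ipN. Qed.
Lemma ipDr (x y z : H) : inner z (x + y) = inner z x + inner z y.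
Proof. by rewrite (ipC x z) (ipC y z) (ipC (x + y) z) ipD rmorphD. Qed.
Lemma ipZr (a : C) (x z : H) : inner z (a *: x) = a^* * inner z x.
Proof. by rewrite (ipC x z) (ipC (a *: x) z) ipZ rmorphM. Qed.
Lemma ip0r (z : H) : inner z 0 = 0.
Proof. by rewrite (ipC 0 z) ip0 rmorph0. Qed.
Lemma ipNr (x z : H) : inner z (- x) = - inner z x.
Proof. by rewrite (ipC x z) (ipC (- x) z) ipN rmorphN. Qed.
Lemma ipBr (x y z : H) : inner z (x - y) = inner z x - inner z y.
Proof. by rewrite ipDr ipNr. Qed.

Lemma hnorm_ge0 (x : H) : 0 <= hnorm x.
Proof. exact: sqrtr_ge0. Qed.

Lemma ipxx (x : H) : inner x x = (hnorm x ^+ 2)%:C.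
Proof.
rewrite /hnorm /ip_norm sqr_sqrtr; first exact: ge0C_real (ip_ge0 x).
by rewrite -ler0c -ge0C_real ?ip_ge0.
Qed.

Lemma hnorm_eq0 (x : H) : hnorm x = 0 -> x = 0.
Proof. by move=> h; apply: ip_eq0; rewrite ipxx h expr0n. Qed.

Lemma hnorm0 : hnorm (0 : H) = 0.
Proof.
have := ipxx 0; rewrite ip0 => /(congr1 (@complex.Re R)) /= /eqP.
by rewrite eq_sym sqrf_eq0 => /eqP.
Qed.

Lemma ext_ip (u v : H) : (forall w, inner u w = inner v w) -> u = v.
Proof.
move=> h; apply/eqP; rewrite -subr_eq0; apply/eqP; apply: ip_eq0.
by rewrite ipB h subrr.
Qed.

Lemma CS2 (x y : H) : `|inner x y| ^+ 2 <= inner x x * inner y y.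
Proof.
have [->|y0] := eqVneq y 0; first by rewrite ip0r ip0 normr0 expr0n mulr0.
have yy0 : inner y y != 0 by apply: contra y0 => /eqP /ip_eq0 ->.
set t := inner x y / inner y y.
have := ip_ge0 (x - t *: y).
rewrite ipB !ipBr !ipZ !ipZr.
rewrite (ipC x y).
have hyy : (inner y y)^* = inner y y by rewrite ipxx realC_conj.
have -> : t^* = (inner x y)^* / inner y y.
  by rewrite /t conjM conjV hyy.
rewrite normCK.
set a := inner x y; set b := inner y y; set c := inner x x.
have -> : c - (a^* / b * a) - (t * a^* - t * (a^* / b * b)) = c - a * a^* / b.
  move: yy0; rewrite -/b => yy0; rewrite /t -/a -/b; clearbody a b c; field; exact: yy0.
rewrite subr_ge0 => h.
have b0 : 0 < b by rewrite lt_def; apply/andP; split; [exact: yy0 | exact: ip_ge0].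
by rewrite -ler_pdivrMr.
Qed.

Definition cabs (z : C) : R := complex.Re `|z|.
Lemma cabsE (z : C) : `|z| = (cabs z)%:C. Proof. exact: absC_real. Qed.
Lemma cabs_ge0 (z : C) : 0 <= cabs z. Proof. exact: absC_ge0R. Qed.
Lemma cabs_eq0 (z : C) : cabs z = 0 -> z = 0.
Proof. by move=> h; apply/eqP; rewrite -normr_eq0 cabsE h. Qed.
Lemma cabs0 : cabs 0 = 0. Proof. by rewrite /cabs normr0. Qed.
Lemma cabsD (u v : C) : cabs (u + v) <= cabs u + cabs v.
Proof. by rewrite -lecR realCD -!cabsE ler_normD. Qed.
Lemma cabsN (u : C) : cabs (- u) = cabs u. Proof. by rewrite /cabs normrN. Qed.
Lemma cabsB (u v : C) : cabs (u - v) <= cabs u + cabs v.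
Proof. by rewrite -(cabsN v) cabsD. Qed.
Lemma cabsM (u v : C) : cabs (u * v) = cabs u * cabs v.
Proof. by apply: complexI; rewrite realCM -!cabsE normrM. Qed.
Lemma cabs_conj (u : C) : cabs (u^*) = cabs u.
Proof. by rewrite /cabs norm_conjC. Qed.
Lemma cabs_real (r : R) : cabs r%:C = `|r|.
Proof.
apply: complexI; rewrite -cabsE.
by rewrite normc_def /= expr0n addr0 sqrtr_sqr.
Qed.
Lemma ReD (u v : C) : complex.Re (u + v) = complex.Re u + complex.Re v.
Proof. by case: u; case: v. Qed.
Lemma ReN (u : C) : complex.Re (- u) = - complex.Re u.
Proof. by case: u. Qed.
Lemma ReC (u : C) : complex.Re (u^*) = complex.Re u.
Proof. by case: u. Qed.
Lemma Re_real (r : R) : complex.Re r%:C = r. Proof. by []. Qed.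
Lemma Re_le_cabs (u : C) : complex.Re u <= cabs u.
Proof.
have := normc_ge_Re u; rewrite cabsE lecR => h.
exact: le_trans (ler_norm _) h.
Qed.

Lemma CS (x y : H) : cabs (inner x y) <= hnorm x * hnorm y.
Proof.
have := CS2 x y; rewrite cabsE !ipxx -!realCX -realCM lecR -exprMn.
by rewrite ler_sqr // nnegrE ?cabs_ge0 // mulr_ge0 // hnorm_ge0.
Qed.

Lemma hnormD2 (x y : H) :
  hnorm (x + y) ^+ 2 = hnorm x ^+ 2 + hnorm y ^+ 2 + 2 * complex.Re (inner x y).
Proof.
have := ipxx (x + y); rewrite ipD !ipDr !ipxx (ipC x y).
move/(congr1 (@complex.Re R)); rewrite !ReD ReC !Re_real => <-; ring.
Qed.

Lemma hnormD (x y : H) : hnorm (x + y) <= hnorm x + hnorm y.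
Proof.
have h1 := hnorm_ge0 x; have h2 := hnorm_ge0 y.
rewrite -ler_sqr ?nnegrE ?addr_ge0 ?hnorm_ge0 // hnormD2.
have := Re_le_cabs (inner x y); have := CS x y.
move: (complex.Re _) (cabs _) => r c; nra.
Qed.

Lemma hnormN (x : H) : hnorm (- x) = hnorm x.
Proof. by rewrite /hnorm /ip_norm -/(inner _ _) -/(inner _ _) ipN ipNr opprK. Qed.

Lemma hnormB (x y : H) : hnorm (x - y) = hnorm (y - x).
Proof. by rewrite -hnormN opprB. Qed.

Lemma hnormZ (a : C) (x : H) : hnorm (a *: x) = cabs a * hnorm x.
Proof.
rewrite -[LHS]ger0_norm ?hnorm_ge0 // -sqrtr_sqr.
have := ipxx (a *: x); rewrite ipZ ipZr mulrA -normCK ipxx cabsE.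
rewrite -!realCX -realCM => /complexI <-.
by rewrite -exprMn sqrtr_sqr ger0_norm // mulr_ge0 ?cabs_ge0 ?hnorm_ge0.
Qed.

Lemma parallelogram (u v : H) :
  hnorm (u + v) ^+ 2 + hnorm (u - v) ^+ 2 = 2 * hnorm u ^+ 2 + 2 * hnorm v ^+ 2.
Proof. by rewrite !hnormD2 hnormN ipNr ReN; ring. Qed.

End Basics.

Section Ops.
Variable R : realType.
Local Notation C := (R[i]).
Local Notation "x %:C" := (real_complex R x) (at level 1, format "x %:C") : ring_scope.

Lemma eps_zero (a K : R) : 0 <= a -> (forall e : R, 0 < e -> a <= e * K) -> a = 0.
Proof.
move=> a0 h; have [->//|ap] := eqVneq a 0.
have {}ap : 0 < a by rewrite lt_def ap a0.
have h1 := h 1 ltr01; rewrite mul1r in h1.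
have K0 : 0 < K by lra.
have e0 : 0 < a / (2 * K) by rewrite divr_gt0 // mulr_gt0.
have := h _ e0.
have -> : a / (2 * K) * K = a / 2 by field; rewrite gt_eqF.
lra.
Qed.

Section Lin.
Variables H K : hspace R.

Lemma bl_lin (T : H -> K) : bounded_linear T ->
  forall (a : C) (x y : H), T (a *: x + y) = a *: T x + T y.
Proof. by case. Qed.

Lemma lin0 (T : H -> K) : (forall (a : C) (x y : H), T (a *: x + y) = a *: T x + T y) ->
  T 0 = 0.
Proof.
move=> h; have := h 1 0 0; rewrite !scale1r addr0 => e.
by apply: (@addrI _ (T 0)); rewrite addr0 -e.
Qed.

Lemma linD (T : H -> K) : (forall (a : C) (x y : H), T (a *: x + y) = a *: T x + T y) ->
  forall x y, T (x + y) = T x + T y.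
Proof. by move=> h x y; rewrite -[x in LHS]scale1r h scale1r. Qed.

Lemma linZ (T : H -> K) : (forall (a : C) (x y : H), T (a *: x + y) = a *: T x + T y) ->
  forall a x, T (a *: x) = a *: T x.
Proof. by move=> h a x; rewrite -[a *: x]addr0 h (lin0 h) addr0. Qed.

Lemma linN (T : H -> K) : (forall (a : C) (x y : H), T (a *: x + y) = a *: T x + T y) ->
  forall x, T (- x) = - T x.
Proof. by move=> h x; rewrite -scaleN1r (linZ h) scaleN1r. Qed.

Lemma linB (T : H -> K) : (forall (a : C) (x y : H), T (a *: x + y) = a *: T x + T y) ->
  forall x y, T (x - y) = T x - T y.
Proof. by move=> h x y; rewrite (linD h) (linN h). Qed.

Lemma bl_bound (T : H -> K) : bounded_linear T ->
  exists c : R, 0 <= c /\ forall x, hnorm (T x) <= c * hnorm x.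
Proof.
case=> _ [c hc]; exists (Num.max c 0); split; first by rewrite le_max lexx orbT.
move=> x; apply: (le_trans (hc x)); apply: ler_wpM2r; first exact: hnorm_ge0.
by rewrite le_max lexx.
Qed.

Lemma adj_sym (T : H -> K) (S : K -> H) : is_adjoint T S ->
  forall y x, inner (S y) x = inner y (T x).
Proof. by move=> h y x; rewrite ipC -h -ipC. Qed.

Lemma adj_lin (T : H -> K) (S : K -> H) : is_adjoint T S ->
  forall (a : C) (x y : K), S (a *: x + y) = a *: S x + S y.
Proof.
move=> h a x y; apply: ext_ip => w.
by rewrite !(adj_sym h) ipDl ipD ipZ !(adj_sym h).
Qed.

Lemma adj_bound (T : H -> K) (S : K -> H) (c : R) : is_adjoint T S -> 0 <= c ->
  (forall x, hnorm (T x) <= c * hnorm x) -> forall y, hnorm (S y) <= c * hnorm y.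
Proof.
move=> hS c0 hc y.
have h : (hnorm (S y) ^+ 2)%:C = (inner (T (S y)) y)^*.
  by rewrite -ipxx (adj_sym hS) ipC.
have := congr1 (@cabs R) h; rewrite cabs_conj cabs_real ger0_norm ?exprn_ge0 ?hnorm_ge0 // => h2.
have := CS (T (S y)) y; rewrite -h2 => hcs.
have h3 : hnorm (S y) ^+ 2 <= hnorm (S y) * (c * hnorm y).
  apply: (le_trans hcs); rewrite mulrCA mulrA; apply: ler_wpM2r; first exact: hnorm_ge0.
  exact: hc.
have d0 : 0 <= c * hnorm y by rewrite mulr_ge0 ?hnorm_ge0.
have := hnorm_ge0 (S y).
move: (c * hnorm y) (hnorm (S y)) h3 d0 => d a; nra.
Qed.

Lemma clr_in (E : H -> K) x : cl_ran E (E x).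
Proof. by move=> e e0; exists x; rewrite subrr hnorm0. Qed.

Lemma clr_B (E : H -> K) : (forall (a : C) (x y : H), E (a *: x + y) = a *: E x + E y) ->
  forall u v, cl_ran E u -> cl_ran E v -> cl_ran E (u - v).
Proof.
move=> hE u v hu hv e e0.
have e2 : 0 < e / 2 by rewrite divr_gt0.
have [x1 h1] := hu _ e2; have [x2 h2] := hv _ e2.
exists (x1 - x2); rewrite (linB hE).
rewrite subBB.
apply: (le_lt_trans (hnormD _ _)); rewrite hnormN; lra.
Qed.

Lemma clr_0 (E : H -> K) : (forall (a : C) (x y : H), E (a *: x + y) = a *: E x + E y) ->
  cl_ran E 0.
Proof. by move=> hE; rewrite -(lin0 hE); apply: clr_in. Qed.

End Lin.


Lemma ReE2 (c : C) : (2 * complex.Re c)%:C = c + c^*.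
Proof. by case: c => a b; apply/eqP; rewrite eq_complex /=; apply/andP; split; apply/eqP; lra. Qed.

Definition Pform (H : hspace R) (A B Bs M : H -> H) (x y : H) : C :=
  inner (A x - M x + Bs y) x + inner (B x + M y) y.

Section PformS.
Variables H K1 K2 : hspace R.
Variables (A B Bs M : H -> H) (E : H -> K1) (F : H -> K2) (G : K1 -> K2).
Hypotheses (hB : is_adjoint B Bs) (hAM : factors_as (fun x => A x - M x) E)
  (hM : factors_as M F) (hBf : block_factor B E F G).

Lemma ip_B x y : inner (B x) y = inner (G (E x)) (F y).
Proof. by case: hBf => _ [Fs [hFs ->]]; rewrite (adj_sym hFs). Qed.

Lemma ip_M x y : inner (M x) y = inner (F x) (F y).
Proof. by case: hM => _ [Fs [hFs ->]]; rewrite (adj_sym hFs). Qed.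

Lemma ip_AM x y : inner (A x - M x) y = inner (E x) (E y).
Proof. by case: hAM => _ [Es [hEs ->]]; rewrite (adj_sym hEs). Qed.

Lemma Pform_fact x y : Pform A B Bs M x y =
  (hnorm (G (E x) + F y) ^+ 2 + (hnorm (E x) ^+ 2 - hnorm (G (E x)) ^+ 2))%:C.
Proof.
rewrite /Pform ipD ip_AM (adj_sym hB) ipD ip_M (ipC (B x) y) ip_B hnormD2.
rewrite !(realCD, realCN) ReE2 -!ipxx. ring.
Qed.

Lemma contr_le u : cl_ran E u -> hnorm (G u) <= hnorm u.
Proof. by case: hBf => [[_ _ h] _]; apply: h. Qed.

Lemma Pform_ge x y : exists2 s : R, Pform A B Bs M x y = s%:C &
  hnorm (G (E x) + F y) ^+ 2 <= s.
Proof.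
rewrite Pform_fact; eexists; first reflexivity.
have h := contr_le (clr_in E x).
rewrite lerDl subr_ge0 ler_sqr ?nnegrE ?hnorm_ge0 //.
Qed.

Lemma ip_BM x y w : inner (B x + M y) w = inner (G (E x) + F y) (F w).
Proof. by rewrite !ipD ip_B ip_M. Qed.
End PformS.

Lemma Pform_avg (H : hspace R) (A B Bs Mp Mm : H -> H) x y :
  Pform A B Bs (fun x => 2^-1 *: (Mp x + Mm x)) x y =
  2^-1 * (Pform A B Bs Mp x y + Pform A B Bs Mm x y).
Proof.
by rewrite /Pform !(ipD, ipN, ipZ); field.
Qed.

Section Dir2.
Variables H KEp KFp KEm KFm KEs KFs : hspace R.
Variables (A B Bs Mp Mm : H -> H).
Variables (Ep : H -> KEp) (Fp : H -> KFp) (Gp : KEp -> KFp)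
  (Em : H -> KEm) (Fm : H -> KFm) (Gm : KEm -> KFm)
  (Es : H -> KEs) (Fs : H -> KFs) (Gs : KEs -> KFs).
Let Mst := fun x => 2^-1 *: (Mp x + Mm x).
Hypotheses (hB : is_adjoint B Bs)
  (hAMp : factors_as (fun x => A x - Mp x) Ep) (hMp : factors_as Mp Fp)
  (hBfp : block_factor B Ep Fp Gp)
  (hAMm : factors_as (fun x => A x - Mm x) Em) (hMm : factors_as Mm Fm)
  (hBfm : block_factor B Em Fm Gm)
  (hAMs : factors_as (fun x => A x - Mst x) Es) (hMs : factors_as Mst Fs)
  (hBfs : block_factor B Es Fs Gs) (hUs : unitary_between Es Fs Gs).

Lemma dir2_eq y : Mp y = Mm y.
Proof.
apply/eqP; rewrite -subr_eq0; apply/eqP; apply: ip_eq0.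
suff key : forall w, inner (Mp y - Mm y) w = 0 by apply: key.
move=> w.
apply: cabs_eq0; apply: (eps_zero (K := 2 * (hnorm (Fp w) + hnorm (Fm w)))).
  exact: cabs_ge0.
move=> e e0.
have linF : forall (a : C) (x y : H), Fs (a *: x + y) = a *: Fs x + Fs y.
  by case: hMs => [[]].
have linE : forall (a : C) (x y : H), Es (a *: x + y) = a *: Es x + Es y.
  by case: hAMs => [[]].
case: hUs => hGl _ hGiso hGsurj.
have [u hu Gu] := hGsurj _ (clr_in Fs (- y)).
have [x hx] := hu _ e0.
have hs : hnorm (Gs (Es x) + Fs y) < e.
  have -> : Gs (Es x) + Fs y = Gs (Es x - u).
    have -> : Es x - u = (-1) *: u + Es x by rewrite scaleN1r addrC.
    by rewrite (hGl _ _ _ hu (clr_in Es x)) Gu (linN linF) scaleN1r opprK addrC.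
  rewrite hGiso; last by apply: clr_B => //; apply: clr_in.
  by rewrite hnormB.
have [sp ep lp] := Pform_ge hB hAMp hMp hBfp x y.
have [sm em lm] := Pform_ge hB hAMm hMm hBfm x y.
have es := Pform_fact hB hAMs hMs hBfs x y.
rewrite (hGiso _ (clr_in Es x)) in es.
have := Pform_avg A B Bs Mp Mm x y; rewrite -/Mst es ep em.
rewrite -realCD -realC_half -realCM => /complexI ess.
have sm0 : 0 <= sm by apply: le_trans lm; apply: exprn_ge0; apply: hnorm_ge0.
have hp : hnorm (Gp (Ep x) + Fp y) <= 2 * e.
  have := hnorm_ge0 (Gp (Ep x) + Fp y); have := hnorm_ge0 (Gs (Es x) + Fs y).
  move: (hnorm (Gp _ + _)) (hnorm (Gs _ + _)) (hnorm (Es x)) hs lp ess => a b c; nra.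
have hm : hnorm (Gm (Em x) + Fm y) <= 2 * e.
  have := hnorm_ge0 (Gm (Em x) + Fm y); have := hnorm_ge0 (Gs (Es x) + Fs y).
  move: (hnorm (Gm _ + _)) (hnorm (Gs _ + _)) (hnorm (Es x)) hs lm ess => a b c; nra.
have -> : inner (Mp y - Mm y) w = inner (B x + Mp y) w - inner (B x + Mm y) w.
  by rewrite ipB !ipD; ring.
rewrite (ip_BM hMp hBfp) (ip_BM hMm hBfm).
apply: (le_trans (cabsB _ _)).
have c1 := CS (Gp (Ep x) + Fp y) (Fp w); have c2 := CS (Gm (Em x) + Fm y) (Fm w).
have := hnorm_ge0 (Fp w); have := hnorm_ge0 (Fm w).
have := hnorm_ge0 (Gp (Ep x) + Fp y); have := hnorm_ge0 (Gm (Em x) + Fm y).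
move: c1 c2 hp hm; move: (cabs _) (cabs _) (hnorm (Fp w)) (hnorm (Fm w)) (hnorm (Gp _ + _)) (hnorm (Gm _ + _)).
move=> c1 c2 a b p q; nra.
Qed.
End Dir2.

Lemma inv_small (e : R) : 0 < e ->
  exists N : nat, forall n, (N <= n)%N -> (n.+1%:R : R)^-1 < e.
Proof.
move=> e0; have ei : 0 <= e^-1 by rewrite invr_ge0 ltW.
have := archi_boundP ei.
set N := Num.Def.archi_bound _ => hN; exists N => n hn.
have k0 : (0 : R) < n.+1%:R by rewrite ltr0n.
have hk : (N%:R : R) <= n.+1%:R by rewrite ler_nat; apply: leqW.
rewrite -(invrK e) ltf_pV2 ?posrE ?invr_gt0 //.
exact: lt_le_trans hN hk.
Qed.

Lemma le_eps (a b : R) : (forall e, 0 < e -> a <= b + e) -> a <= b.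
Proof.
move=> h; rewrite leNgt; apply/negP => ab.
have := h ((a - b) / 2); rewrite divr_gt0 ?subr_gt0 // => /(_ isT); lra.
Qed.

Section Dir1.
Variables H K1 K2 : hspace R.
Variables (A B Bs M0 : H -> H) (E : H -> K1) (F : H -> K2) (G : K1 -> K2).
Hypotheses (hA : bounded_linear A) (hB : is_adjoint B Bs)
  (hAM : factors_as (fun x => A x - M0 x) E) (hM : factors_as M0 F)
  (hBf : block_factor B E F G)
  (huniq : forall M, calM A B Bs M -> M = M0).

Let linE : forall (a : C) (x y : H), E (a *: x + y) = a *: E x + E y.
Proof. by case: hAM => [[]]. Qed.
Let linF : forall (a : C) (x y : H), F (a *: x + y) = a *: F x + F y.
Proof. by case: hM => [[]]. Qed.
Let hGl : forall (a : C) (u v : K1), cl_ran E u -> cl_ran E v ->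
        G (a *: u + v) = a *: G u + G v.
Proof. by case: hBf => [[]]. Qed.
Let hGr : forall u : K1, cl_ran E u -> cl_ran F (G u).
Proof. by case: hBf => [[]]. Qed.
Let hGc : forall u : K1, cl_ran E u -> hnorm (G u) <= hnorm u.
Proof. by case: hBf => [[]]. Qed.

Let GE_lin (a : C) x y : G (E (a *: x + y)) = a *: G (E x) + G (E y).
Proof. by rewrite linE (hGl _ (clr_in E x) (clr_in E y)). Qed.

Lemma Bs_bound : exists c : R, 0 <= c /\
  (forall x, hnorm (E x) <= c * hnorm x) /\
  (forall y, hnorm (Bs y) <= c * hnorm (F y)).
Proof.
have [bE _] := hAM.
have [c [c0 hc]] := bl_bound bE; exists c; split => //; split => // y.
have h : (hnorm (Bs y) ^+ 2)%:C = (inner (G (E (Bs y))) (F y))^*.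
  by rewrite -ipxx (adj_sym hB) ipC (ip_B hBf).
have := congr1 (@cabs R) h; rewrite cabs_conj cabs_real ger0_norm ?exprn_ge0 ?hnorm_ge0 //.
move=> h2.
have := CS (G (E (Bs y))) (F y); rewrite -h2.
have := hGc (clr_in E (Bs y)); have := hc (Bs y).
have := hnorm_ge0 (Bs y); have := hnorm_ge0 (F y); have := hnorm_ge0 (G (E (Bs y))).
move: (hnorm (Bs y)) (hnorm (F y)) (hnorm (G _)) (hnorm (E _)) => a b g f.
move=> g0 b0 a0 hf hg hcs.
have h3 : a ^+ 2 <= a * (c * b).
  apply: (le_trans hcs); rewrite mulrA [a * c]mulrC; apply: ler_wpM2r => //.
  exact: le_trans hg hf.
have d0 : 0 <= c * b by apply: mulr_ge0.
move: (c * b) h3 d0 => d; nra.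
Qed.

Lemma T_exists x : exists z : H, forall w, inner z w = inner (G (E x)) (G (E w)).
Proof.
have [c [c0 [hcE hcB]]] := Bs_bound.
set v := G (E x).
have hv : cl_ran F v := hGr (clr_in E x).
have : forall n : nat, exists y, hnorm (v - F y) < (n.+1%:R)^-1.
  by move=> n; apply: hv; rewrite invr_gt0 ltr0n.
case/boolp.choice => ys hys.
have Hc : forall e : R, 0 < e -> exists N : nat, forall m n : nat,
    (N <= m)%N -> (N <= n)%N -> hnorm ((Bs \o ys) m - (Bs \o ys) n) < e.
  move=> e e0.
  set f := e / (2 * c + 1).
  have c1 : 0 < 2 * c + 1 by rewrite ltr_pwDr // mulr_ge0.
  have f0 : 0 < f by rewrite divr_gt0.
  have ef : e = f * (2 * c + 1) by rewrite /f; field; rewrite gt_eqF.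
  have [N hN] := inv_small f0; exists N => m n hm hn /=.
  rewrite -(linB (adj_lin hB)).
  apply: (le_lt_trans (hcB _)); rewrite (linB linF) (subB3 _ _ v).
  have := hnormD (v - F (ys n)) (- (v - F (ys m))); rewrite hnormN.
  have := hys m; have := hys n; have := hN _ hm; have := hN _ hn.
  rewrite ef; clearbody f.
  move: (hnorm (v - F (ys n) + _)) (hnorm (v - F (ys n))) (hnorm (v - F (ys m))).
  move: (n.+1%:R^-1 : R) (m.+1%:R^-1 : R) => i j a b d; nra.
have [z hz] := @hs_complete R H (Bs \o ys) Hc.
exists z => w.
apply/eqP; rewrite -subr_eq0; apply/eqP; apply: cabs_eq0.
apply: (eps_zero (K := hnorm w + hnorm (G (E w)))); first exact: cabs_ge0.
move=> e e0.
have [N1 hN1] := hz e e0.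
have [N2 hN2] := inv_small e0.
have h1 := hN1 (maxn N1 N2) (leq_maxl _ _).
have h2 := hN2 (maxn N1 N2) (leq_maxr _ _).
have h3 := hys (maxn N1 N2).
move: (maxn N1 N2) h1 h2 h3 => n h1 h2 h3 /=.
have -> : inner z w - inner v (G (E w)) =
    - inner (Bs (ys n) - z) w + - inner (v - F (ys n)) (G (E w)).
  rewrite !ipB (adj_sym hB) (ipC (B w) (ys n)) (ip_B hBf).
  rewrite -(ipC (G (E w)) (F (ys n))); ring.
apply: (le_trans (cabsD _ _)); rewrite !cabsN.
have c1 := CS (Bs (ys n) - z) w; have c2 := CS (v - F (ys n)) (G (E w)).
have := hnorm_ge0 w; have := hnorm_ge0 (G (E w)).
have := hnorm_ge0 (Bs (ys n) - z); have := hnorm_ge0 (v - F (ys n)).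
move: h1 h2 h3 c1 c2; rewrite -/(hnorm _).
move: (cabs _) (cabs _) (hnorm w) (hnorm (G (E w))) (hnorm (Bs _ - z)) (hnorm (v - _)).
move: (n.+1%:R^-1 : R) => i a b p q r s; nra.
Qed.

Lemma sq_le (a b : R) : 0 <= a -> 0 <= b -> a <= b -> a ^+ 2 <= b ^+ 2.
Proof. by move=> a0 b0 ab; rewrite ler_sqr ?nnegrE. Qed.

Lemma GE_iso x : hnorm (G (E x)) = hnorm (E x).
Proof.
have [T hT] : exists T : H -> H, forall x w, inner (T x) w = inner (G (E x)) (G (E w)).
  by case: (boolp.choice T_exists) => T hT; exists T.
have [c [c0 [hcE _]]] := Bs_bound.
have [cA [cA0 hcA]] := bl_bound hA.
have linA := bl_lin hA.
have linT : forall (a : C) x y, T (a *: x + y) = a *: T x + T y.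
  by move=> a x1 y; apply: ext_ip => w; rewrite hT GE_lin !ipDl !hT.
have bT : forall x, hnorm (T x) <= c ^+ 2 * hnorm x.
  move=> x1.
  have h : (hnorm (T x1) ^+ 2)%:C = inner (G (E x1)) (G (E (T x1))) by rewrite -ipxx hT.
  have := congr1 (@cabs R) h; rewrite cabs_real ger0_norm ?exprn_ge0 ?hnorm_ge0 // => h2.
  have := CS (G (E x1)) (G (E (T x1))); rewrite -h2 => hcs.
  have g1 := hGc (clr_in E x1); have g2 := hGc (clr_in E (T x1)).
  have f1 := hcE x1; have f2 := hcE (T x1).
  have h3 : hnorm (T x1) ^+ 2 <= hnorm (T x1) * (c ^+ 2 * hnorm x1).
    apply: (le_trans hcs).
    have -> : hnorm (T x1) * (c ^+ 2 * hnorm x1) = (c * hnorm x1) * (c * hnorm (T x1)) by ring.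
    apply: ler_pM; rewrite ?hnorm_ge0 //.
      exact: le_trans g1 f1.
    exact: le_trans g2 f2.
  have d0 : 0 <= c ^+ 2 * hnorm x1 by rewrite mulr_ge0 ?exprn_ge0 ?hnorm_ge0.
  have := hnorm_ge0 (T x1).
  move: (c ^+ 2 * hnorm x1) (hnorm (T x1)) h3 d0 => d a; nra.
pose M' := fun x => A x - T x.
have hM' : calM A B Bs M'.
  split; first split.
  - split.
      move=> a x1 y; rewrite /M' linA linT scalerBr.
      by rewrite opprD addrACA.
    exists (cA + c ^+ 2) => x1; rewrite /M'.
    apply: (le_trans (hnormD _ _)); rewrite hnormN mulrDl; apply: lerD => //.
  - move=> x1; rewrite /M'.
    have -> : A x1 - T x1 = (A x1 - M0 x1) + M0 x1 - T x1 by rewrite subrK.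
    rewrite ipB ipD (ip_AM hAM) (ip_M hM) hT !ipxx -realCD -realCB ler0c.
    have := sq_le (hnorm_ge0 _) (hnorm_ge0 _) (hGc (clr_in E x1)).
    have := exprn_ge0 2 (hnorm_ge0 (F x1)).
    move: (hnorm (F x1) ^+ 2) (hnorm (E x1) ^+ 2) (hnorm (G (E x1)) ^+ 2) => a b d; lra.
  - move=> x1 y; rewrite /M'.
    have -> : A x1 - (A x1 - T x1) = T x1 by rewrite opprB addrC subrK.
    have -> : A y - T y = (A y - M0 y) + M0 y - T y by rewrite subrK.
    rewrite ipD hT (adj_sym hB) (ipC (B x1) y) (ip_B hBf) ipD (ip_B hBf) ipB ipD.
    rewrite (ip_AM hAM) (ip_M hM) hT.
    have -> : inner (G (E x1)) (G (E x1)) + (inner (G (E x1)) (F y))^* +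
      (inner (G (E x1)) (F y) + (inner (E y) (E y) + inner (F y) (F y) -
         inner (G (E y)) (G (E y)))) =
      (hnorm (G (E x1) + F y) ^+ 2 + (hnorm (E y) ^+ 2 - hnorm (G (E y)) ^+ 2))%:C.
      by rewrite hnormD2 !(realCD, realCN) ReE2 -!ipxx; ring.
    rewrite ler0c.
    have := sq_le (hnorm_ge0 _) (hnorm_ge0 _) (hGc (clr_in E y)).
    have := exprn_ge0 2 (hnorm_ge0 (G (E x1) + F y)).
    move: (hnorm (G (E x1) + F y) ^+ 2) (hnorm (E y) ^+ 2) (hnorm (G (E y)) ^+ 2) => a b d; lra.
have ex := congr1 (fun f => f x) (huniq hM'); rewrite /M' /= in ex.
have eT : T x = A x - M0 x by rewrite -ex opprB addrC subrK.
have := ipxx (G (E x)); rewrite -hT eT (ip_AM hAM) ipxx => /complexI.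
have := hnorm_ge0 (G (E x)); have := hnorm_ge0 (E x).
move: (hnorm (G (E x))) (hnorm (E x)) => a b a0 b0 hab.
by apply/eqP; rewrite eq_le; apply/andP; split; nra.
Qed.

Lemma G_sub u u' : cl_ran E u -> cl_ran E u' -> G u - G u' = G (u - u').
Proof.
move=> hu hu'; have -> : u - u' = (-1) *: u' + u by rewrite scaleN1r addrC.
by rewrite (hGl _ hu' hu) scaleN1r addrC.
Qed.

Lemma G_iso u : cl_ran E u -> hnorm (G u) = hnorm u.
Proof.
move=> hu; apply/eqP; rewrite eq_le hGc //=.
rewrite leNgt; apply/negP => lt.
set e := (hnorm u - hnorm (G u)) / 3.
have e0 : 0 < e by rewrite divr_gt0 // subr_gt0.
have [x hx] := hu _ e0.
have h1 : hnorm u <= hnorm (u - E x) + hnorm (E x).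
  by have := hnormD (u - E x) (E x); rewrite subrK.
have h2 : hnorm (G (E x)) <= hnorm (G (E x) - G u) + hnorm (G u).
  by have := hnormD (G (E x) - G u) (G u); rewrite subrK.
rewrite (G_sub (clr_in E x) hu) in h2.
have h3 := hGc (clr_B linE (clr_in E x) hu).
rewrite GE_iso in h2; rewrite [hnorm (E x - u)]hnormB in h3.
have : hnorm u - hnorm (G u) = 3 * e by rewrite /e; field.
lra.
Qed.

Let GE_linD x y : G (E (x + y)) = G (E x) + G (E y).
Proof. exact: (linD GE_lin). Qed.
Let GE_linZ (a : C) x : G (E (a *: x)) = a *: G (E x).
Proof. exact: (linZ GE_lin). Qed.
Let GE_linB x y : G (E (x - y)) = G (E x) - G (E y).
Proof. exact: (linB GE_lin). Qed.

Lemma cabs2 : cabs (2 : C) = 2.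
Proof. by rewrite /cabs normr_nat. Qed.

Lemma proj_exists v : exists2 u, cl_ran E u & forall x, inner (v - G u) (G (E x)) = 0.
Proof.
pose f := fun x => hnorm (v - G (E x)).
pose S := (fun y : R => exists x, y = f x).
have hinf : classical_sets.has_inf S.
  split; first by exists (f 0), 0.
  by exists 0 => y [x ->]; exact: hnorm_ge0.
pose d := inf S.
have dl : forall x, d <= f x.
  by move=> x; apply: (ge_inf hinf.2); exists x.
have d0 : 0 <= d.
  apply: lb_le_inf; first by exists (f 0), 0.
  by move=> y [x ->]; exact: hnorm_ge0.
have : forall n : nat, exists x, f x < d + n.+1%:R^-1.
  move=> n; have hl : d < d + n.+1%:R^-1 by rewrite ltrDl invr_gt0 ltr0n.
  by have [x hx _] := lt_inf_imfset hinf hl; exists x.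
case/boolp.choice => xs hxs.
have hC : forall e : R, 0 < e -> exists N : nat, forall m n : nat,
    (N <= m)%N -> (N <= n)%N -> hnorm ((E \o xs) m - (E \o xs) n) < e.
  move=> e e0.
  have ee0 : 0 < e ^+ 2 by rewrite exprn_gt0.
  have D0 : 0 < 8 * d + 4 + e ^+ 2 by lra.
  set g := e ^+ 2 / (8 * d + 4 + e ^+ 2).
  have g0 : 0 < g by rewrite divr_gt0.
  have eg : g * (8 * d + 4 + e ^+ 2) = e ^+ 2 by rewrite /g; field; rewrite gt_eqF.
  have [N hN] := inv_small g0; exists N => m n hm hn /=.
  rewrite -(linB linE) -GE_iso GE_linB.
  set a := G (E (xs m)); set b := G (E (xs n)).
  have hpq := parallelogram (v - a) (v - b).
  have e1 : v - a + (v - b) = 2 *: (v - G (E (2^-1 *: (xs m + xs n)))).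
    rewrite GE_linZ GE_linD -/a -/b; apply: ext_ip => z0.
    by rewrite !(ipD, ipN, ipZ); field.
  have e2 : v - a - (v - b) = - (a - b).
    by apply: ext_ip => z1; rewrite !(ipD, ipN); ring.
  rewrite e1 e2 hnormN hnormZ cabs2 in hpq.
  have l1 := dl (2^-1 *: (xs m + xs n)); rewrite /f in l1.
  have l2 := hxs m; have l3 := hxs n; rewrite /f -/a -/b in l2 l3.
  have i1 := hN m hm; have i2 := hN n hn.
  have p0 := hnorm_ge0 (v - a); have q0 := hnorm_ge0 (v - b).
  have x0 := hnorm_ge0 (a - b).
  have i0 : 0 < (m.+1%:R^-1 : R) by rewrite invr_gt0 ltr0n.
  have j0 : 0 < (n.+1%:R^-1 : R) by rewrite invr_gt0 ltr0n.
  move: (hnorm (v - G (E _))) (hnorm (v - a)) (hnorm (v - b)) (hnorm (a - b)) l1 l2 l3 hpq p0 q0 x0.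
  move: (n.+1%:R^-1 : R) (m.+1%:R^-1 : R) i1 i2 i0 j0 => j i i1 i2 i0 j0 Mi P Q X l1 l2 l3 hpq p0 q0 x0.
  have g1 : g < 1.
    by rewrite /g ltr_pdivrMr // mul1r; lra.
  have hP : P ^+ 2 <= (d + i) ^+ 2 by apply: sq_le => //; lra.
  have hQ : Q ^+ 2 <= (d + j) ^+ 2 by apply: sq_le => //; lra.
  have hMi : d ^+ 2 <= Mi ^+ 2 by apply: sq_le => //; exact: le_trans d0 l1.
  have hii : i ^+ 2 <= g by nra.
  have hjj : j ^+ 2 <= g by nra.
  have hX : X ^+ 2 < e ^+ 2 by nra.
  by rewrite -(ltr_pXn2r (_ : (0 < 2)%N)) ?nnegrE // ltW.
have [u hu] := @hs_complete R K1 (E \o xs) hC.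
have hucl : cl_ran E u.
  move=> e e0; have [N hN] := hu e e0; exists (xs N); rewrite hnormB.
  exact: (hN N (leqnn N)).
exists u => //.
set w := v - G u.
have key : forall y, d <= hnorm (w - G (E y)).
  move=> y; apply: le_eps => e e0.
  have [N hN] := hu e e0; have h1 := hN N (leqnn N).
  have := dl (xs N + y); rewrite /f GE_linD (zmod_t1 _ _ _ (G u)).
  have := hnormD (v - G u - G (E y)) (G u - G (E (xs N))).
  rewrite (G_sub hucl (clr_in E (xs N))).
  have := hGc (clr_B linE hucl (clr_in E (xs N))); rewrite hnormB.
  have {}h1 : hnorm (E (xs N) - u) < e := h1.
  rewrite -/w; lra.
have hwd : hnorm w <= d.
  apply: le_eps => e e0.
  have e2 : 0 < e / 2 by rewrite divr_gt0.
  have [N1 hN1] := hu _ e2; have [N2 hN2] := inv_small e2.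
  have h1 := hN1 (maxn N1 N2) (leq_maxl _ _).
  have h2 := hN2 (maxn N1 N2) (leq_maxr _ _).
  have h3 := hxs (maxn N1 N2).
  move: (maxn N1 N2) h1 h2 h3 => n h1 h2 h3; rewrite /f in h3.
  have {}h1 : hnorm (E (xs n) - u) < e / 2 := h1.
  rewrite /w (zmod_t2 _ (G (E (xs n)))).
  have := hnormD (v - G (E (xs n))) (G (E (xs n)) - G u).
  rewrite (G_sub (clr_in E (xs n)) hucl).
  have := hGc (clr_B linE (clr_in E (xs n)) hucl).
  have ee : e = e / 2 + e / 2 by field.
  move: h1 h2 h3 ee; move: (e / 2) (n.+1%:R^-1 : R) => f2 i h1 h2 h3 ee Ha Hb.
  lra.
move=> x; set c := inner w (G (E x)); set g := G (E x).
apply: cabs_eq0.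
have hg0 : 0 < hnorm g ^+ 2 + 1 by have := exprn_ge0 2 (hnorm_ge0 g); lra.
set s := (hnorm g ^+ 2 + 1)^-1.
have s0 : 0 < s by rewrite invr_gt0.
have sP : s * hnorm g ^+ 2 = 1 - s by rewrite /s; field; rewrite gt_eqF.
have hk := key ((s%:C * c) *: x); rewrite GE_linZ -/g in hk.
have hk2 : hnorm w ^+ 2 <= hnorm (w - (s%:C * c) *: g) ^+ 2.
  by apply: sq_le; rewrite ?hnorm_ge0 //; apply: le_trans hwd hk.
rewrite [hnorm (w - _) ^+ 2]hnormD2 hnormN hnormZ cabsM cabs_real ger0_norm ?(ltW s0) // ipNr ipZr -/c in hk2.
have e3 : complex.Re (- ((s%:C * c)^* * c)) = - (s * cabs c ^+ 2).
  by rewrite conjM realC_conj -mulrA -normCKC cabsE -realCX -realCM -realCN Re_real.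
rewrite e3 in hk2.
have k0 := cabs_ge0 c.
have eq4 : (s * cabs c * hnorm g) ^+ 2 = s * cabs c ^+ 2 * (1 - s) by rewrite -sP; ring.
rewrite eq4 in hk2.
have hks : s * cabs c ^+ 2 <= 0 by nra.
have : cabs c ^+ 2 <= 0 by rewrite -(pmulr_rle0 _ s0).
move: (cabs c) k0 => k k0 hk3; nra.
Qed.

Lemma G_surj w0 : cl_ran F w0 -> exists2 u, cl_ran E u & G u = w0.
Proof.
move=> hv; have [u hu orth] := proj_exists w0.
exists u => //.
set w := w0 - G u.
suff : w = 0 by move/eqP; rewrite subr_eq0 => /eqP.
apply: hnorm_eq0.
have [//|hw0] := eqVneq (hnorm w) 0.
have hwp : 0 < hnorm w by rewrite lt_def hw0 hnorm_ge0.
have wcl : cl_ran F w := clr_B linF hv (hGr hu).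
case: hM => bF [Fs [hFs eM0]].
have [cF [cF0 hcF]] := bl_bound bF.
have hFsb := adj_bound hFs cF0 hcF.
have k0 : 0 < hnorm w ^+ 2 by rewrite exprn_gt0.
set ki := (hnorm w ^+ 2)^-1.
have ki0 : 0 < ki by rewrite invr_gt0.
pose M'' := fun y => M0 y - (ki%:C * inner (F y) w) *: Fs w.
have orth' : forall x, inner (G (E x)) w = 0.
  by move=> x; rewrite ipC orth conj0.
have hcs2 : forall z : K2, ki * cabs (inner z w) ^+ 2 <= hnorm z ^+ 2.
  move=> z; have := CS z w.
  have a0 := cabs_ge0 (inner z w); have b0 := hnorm_ge0 z; have c0 := hnorm_ge0 w.
  move: (cabs _) (hnorm z) a0 b0 => a b a0 b0 hab.
  rewrite /ki mulrC ler_pdivrMr //.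
  by rewrite -exprMn; apply: sq_le => //; rewrite mulr_ge0.
have hM'' : calM A B Bs M''.
  split; first split.
  - split.
      move=> a x y; apply: ext_ip => z; rewrite /M''.
      by rewrite !(eM0, adj_sym hFs, linF, ipB, ipD, ipN, ipZ); ring.
    exists (cF * cF + ki * cF * hnorm w * hnorm (Fs w)) => x; rewrite /M''.
    apply: (le_trans (hnormD _ _)); rewrite hnormN hnormZ cabsM cabs_real ger0_norm ?(ltW ki0) //.
    rewrite eM0 !mulrDl; apply: lerD.
      apply: (le_trans (hFsb _)); rewrite -mulrA; apply: ler_wpM2l => //.
    have t : cabs (inner (F x) w) <= cF * hnorm w * hnorm x.
      apply: (le_trans (CS _ _)); rewrite mulrAC; apply: ler_wpM2r; first exact: hnorm_ge0.
      exact: hcF.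
    have -> : ki * cF * hnorm w * hnorm (Fs w) * hnorm x =
      ki * (cF * hnorm w * hnorm x) * hnorm (Fs w) by ring.
    apply: ler_wpM2r; first exact: hnorm_ge0.
    by apply: ler_wpM2l => //; apply: ltW.
  - move=> y; rewrite /M'' ipB ipZ eM0 !(adj_sym hFs) (ipC (F y) w).
    rewrite ipxx -mulrA -normCK cabsE -realCX -realCM -realCB ler0c.
    by rewrite subr_ge0 hcs2.
  - move=> x y.
    have -> : inner (A x - M'' x + Bs y) x + inner (B x + M'' y) y =
      Pform A B Bs M0 x y +
        (ki * (cabs (inner (F x) w) ^+ 2 - cabs (inner (F y) w) ^+ 2))%:C.
      rewrite /Pform /M'' !(ipB, ipD, ipN, ipZ) !(adj_sym hFs).
      rewrite (ipC (F x) w) (ipC (F y) w) realCM realCB !realCX -!cabsE !normCK.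
      ring.
    rewrite (Pform_fact hB hAM hM hBf) -realCD ler0c.
    have := hcs2 (G (E x) + F y); rewrite ipD orth' add0r.
    have := hGc (clr_in E x).
    have := sq_le (hnorm_ge0 _) (hnorm_ge0 _) (hGc (clr_in E x)).
    have := cabs_ge0 (inner (F x) w).
    move: (cabs (inner (F x) w)) (cabs (inner (F y) w)) => a b.
    move: (hnorm (G (E x) + F y) ^+ 2) (hnorm (E x) ^+ 2) (hnorm (G (E x)) ^+ 2) => p q r.
    nra.
have ex := congr1 (fun f => f (Fs w)) (huniq hM''); rewrite /M'' /= in ex.
have : (ki * hnorm (Fs w) ^+ 2)%:C *: Fs w = 0.
  move: ex => /eqP; rewrite -subr_eq0 addrAC subrr add0r oppr_eq0 => /eqP.
  by rewrite hFs ipxx => h; rewrite realCM.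
move=> hz.
have Fs0 : Fs w = 0.
  move/eqP: hz; rewrite scaler_eq0 => /orP [|/eqP //].
  rewrite -realC0 => /eqP /complexI /eqP; rewrite mulf_eq0 (gt_eqF ki0) /= sqrf_eq0.
  by move=> /eqP; apply: hnorm_eq0.
have hFw : forall y, inner (F y) w = 0 by move=> y; rewrite hFs Fs0 ip0r.
apply/eqP; rewrite -sqrf_eq0; apply/eqP.
apply: (eps_zero (K := hnorm w)); first exact: exprn_ge0 (hnorm_ge0 w).
move=> e e0; have [y hy] := wcl e e0.
have : (hnorm w ^+ 2)%:C = inner (w - F y) w by rewrite -ipxx ipB hFw subr0.
move/(congr1 (@cabs R)); rewrite cabs_real ger0_norm ?exprn_ge0 ?hnorm_ge0 // => ->.
apply: (le_trans (CS _ _)); apply: ler_wpM2r; first exact: hnorm_ge0.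
exact: ltW.
Qed.

Lemma uniq_unitary : unitary_between E F G.
Proof. by split => //; [exact: G_iso | exact: G_surj]. Qed.

End Dir1.

Lemma factors_ext (H K : hspace R) (T T' : H -> H) (E : H -> K) :
  factors_as T E -> (forall x, T x = T' x) -> factors_as T' E.
Proof. by case=> bE [Es [hEs eT]] h; split => //; exists Es; split => // x; rewrite -h. Qed.

Lemma quad_zero (H : hspace R) (P : H -> H) :
  (forall (a : C) x y, P (a *: x + y) = a *: P x + P y) ->
  (forall x, inner (P x) x = 0) -> forall x, P x = 0.
Proof.
move=> hP hq x; apply: ip_eq0.
have key : forall w, inner (P x) w = 0.
  move=> w.
  have h1 := hq (x + w); rewrite (linD hP) !ipD !ipDr !hq add0r addr0 in h1.
  have h2 := hq (x + 'i *: w); rewrite (linD hP) (linZ hP) !ipD !ipDr !ipZ !ipZr !hq in h2.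
  rewrite conjCi !mulr0 !addr0 add0r in h2.
  have hi : 'i * 'i = -1 :> C by rewrite -expr2 sqrCi.
  have : 2 * inner (P x) w = (inner (P x) w + inner (P w) x) +
     'i * (- 'i * inner (P x) w + 'i * inner (P w) x).
    rewrite mulrDr !mulrA mulrN hi; ring.
  rewrite h1 add0r h2 mulr0 => /eqP; rewrite mulf_eq0 pnatr_eq0 /= => /eqP //.
by rewrite key.
Qed.
End Ops.

Theorem lemma4p2 (R : realType) (H : hspace R) (A B Bs : H -> H)
  (KEp KFp KEm KFm KEs KFs : hspace R)
  (Mp Mm : H -> H)
  (Ep : H -> KEp) (Fp : H -> KFp) (Gp : KEp -> KFp)
  (Em : H -> KEm) (Fm : H -> KFm) (Gm : KEm -> KFm)
  (Es : H -> KEs) (Fs : H -> KFs) (Gs : KEs -> KFs) :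
  bounded_linear A -> selfadjoint A ->
  bounded_linear B -> is_adjoint B Bs ->
  calM A B Bs Mp -> (forall M, calM A B Bs M -> op_le M Mp) ->
  calM A B Bs Mm -> (forall M, calM A B Bs M -> op_le Mm M) ->
  let Mst := fun x => 2^-1 *: (Mp x + Mm x) in
  factors_as (fun x => A x - Mp x) Ep ->
  factors_as (fun x => A x - Mm x) Em ->
  factors_as (fun x => A x - Mst x) Es ->
  factors_as Mp Fp -> factors_as Mm Fm -> factors_as Mst Fs ->
  block_factor B Ep Fp Gp -> block_factor B Em Fm Gm ->
  block_factor B Es Fs Gs ->
  ((exists M0 : H -> H, forall M, calM A B Bs M <-> M = M0) <->
   [/\ unitary_between Ep Fp Gp, unitary_between Em Fm Gm
     & unitary_between Es Fs Gs]).
Proof.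
move=> hA _ _ hB hcMp hmaxp hcMm hminm Mst hAMp hAMm hAMs hMp hMm hMs hBfp hBfm hBfs.
split.
- case=> M0 hM0.
  have huniq : forall M, calM A B Bs M -> M = M0 by move=> M /hM0.
  have eP : Mp = M0 by apply/hM0.
  have eM : Mm = M0 by apply/hM0.
  have eS : forall x, Mst x = M0 x.
    move=> x; rewrite /Mst eP eM scalerDr -scalerDl.
    have -> : (2^-1 + 2^-1 : R[i]) = 1 by field.
    by rewrite scale1r.
  have eS' : forall x, A x - Mst x = A x - M0 x by move=> x; rewrite eS.
  split.
  + rewrite eP in hAMp hMp.
    exact: (uniq_unitary hA hB hAMp hMp hBfp huniq).
  + rewrite eM in hAMm hMm.
    exact: (uniq_unitary hA hB hAMm hMm hBfm huniq).
  + exact: (uniq_unitary hA hB (factors_ext hAMs eS') (factors_ext hMs eS) hBfs huniq).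
- case=> _ _ hUs.
  have eq := dir2_eq hB hAMp hMp hBfp hAMm hMm hBfm hAMs hMs hBfs hUs.
  exists Mp => M; split; last by move=> ->.
  move=> hcM.
  have [[lin _] qP] := hmaxp M hcM.
  have [_ qN] := hminm M hcM.
  have q0 : forall x, inner (Mp x - M x) x = 0.
    move=> x; apply/eqP; rewrite eq_le qP andbT.
    have := qN x; rewrite -eq -oppr_ge0 -ipN opprB.
    done.
  apply: boolp.funext => x; apply/eqP; rewrite eq_sym -subr_eq0; apply/eqP.
  exact: (quad_zero lin q0).
Qed.
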